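(* Let $\mathcal H$ be a finite-dimensional Hilbert space, $H$ a Hermitian operator on $\mathcal H$, $\beta$ a finite nonzero real number, and $\gamma_{\beta,H}=e^{-\beta H}/\mathrm{Tr}\,e^{-\beta H}$ (a full-rank density operator). For a density operator $\rho$ on $\mathcal H$ define the weight of athermality $$A_w(\rho)=\min_{\tau\in\mathscr D(\mathcal H)}\{a\ge 0:\ \rho=(1-a)\gamma_{\beta,H}+a\tau\}.$$ Then this minimum is attained and $$A_w(\rho)=a:=1-\mu_{\min}\!\left(\gamma_{\beta,H}^{-1/2}\,\rho\,\gamma_{\beta,H}^{-1/2}\right),$$ where $\mu_{\min}$ denotes the smallest eigenvalue; moreover $0\le a\le 1$, with $a=0$ if and only if $\rho=\gamma_{\beta,H}$. If $\rho\neq\gamma_{\beta,H}$, the density operator $\tau$ with $\rho=(1-a)\gamma_{\beta,H}+a\tau$ for this minimal $a$ is unique and equals $\tau=\big(\rho-(1-a)\gamma_{\beta,H}\big)/a$.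
   Context: $\mathscr D(\mathcal H)$ denotes the set of density operators (positive semidefinite, unit trace) on $\mathcal H$. $\gamma^{\pm1/2}$ denote the positive square roots of $\gamma$ and of its inverse. *)

(* Defs.v *)
From HB Require Import structures.
From mathcomp Require Import all_boot all_order all_algebra.
From mathcomp Require Import complex.
From mathcomp Require Import classical_sets reals sequences exp.
Set Implicit Arguments. Unset Strict Implicit. Unset Printing Implicit Defensive.
Import Order.TTheory GRing.Theory Num.Theory.
Local Open Scope ring_scope.

Section Defs.
Variable R : realType.
Local Notation C := R[i].

Definition adjmx n m (M : 'M[C]_(n, m)) : 'M[C]_(m, n) := (map_mx Num.conj M)^T.

Definition hermitian_mx n (M : 'M[C]_n) : Prop := M = adjmx M.

Definition unitary_mx n (U : 'M[C]_n) : Prop := U *m adjmx U = 1%:M.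

Definition psd_mx n (M : 'M[C]_n) : Prop :=
  hermitian_mx M /\ forall v : 'rV[C]_n, 0 <= (v *m M *m adjmx v) 0 0.

Definition density_mx n (M : 'M[C]_n) : Prop := psd_mx M /\ \tr M = 1.

(* functional calculus: f applied to the Hermitian matrix U diag(d) U^* *)
Definition fun_mx n (f : R -> R) (U : 'M[C]_n) (d : 'rV[R]_n) : 'M[C]_n :=
  U *m diag_mx (\row_i ((f (d 0 i))%:C)%C) *m adjmx U.

(* gamma = exp(-beta H) / Tr exp(-beta H), with exp(-beta H) defined through a
   spectral decomposition H = U diag(d) U^* (U unitary, d real). *)
Definition gibbs_state n (beta : R) (H gamma : 'M[C]_n) : Prop :=
  exists (U : 'M[C]_n) (d : 'rV[R]_n),
    unitary_mx U /\ H = fun_mx id U d /\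
    let E := fun_mx (fun x => expR (- (beta * x))) U d in
    gamma = (\tr E)^-1 *: E.

(* smallest eigenvalue of a Hermitian matrix (all its eigenvalues are real) *)
Definition mu_min n (M : 'M[C]_n) : R := inf [set x : R | eigenvalue M (x%:C)%C].

Definition athermality_set n (gamma rho : 'M[C]_n) : set R :=
  [set a : R | 0 <= a /\ exists tau : 'M[C]_n,
     density_mx tau /\ rho = ((1 - a)%:C)%C *: gamma + (a%:C)%C *: tau].

End Defs.

(* Main.v *)
Require Import Defs.
From HB Require Import structures.
From mathcomp Require Import all_boot all_order all_algebra.
From mathcomp Require Import complex spectral sesquilinear lra.
From mathcomp Require Import classical_sets reals sequences exp.
Import Order.TTheory GRing.Theory Num.Theory.
Set Implicit Arguments. Unset Strict Implicit. Unset Printing Implicit Defensive.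
Local Open Scope ring_scope.

Section Aux.
Variable R : realType.
Local Notation C := R[i].

Lemma adjmxE n m (A : 'M[C]_(n, m)) : adjmx A = (A ^t* )%sesqui.
Proof. by rewrite /adjmx map_trmx. Qed.

Lemma adjmxK n m (A : 'M[C]_(n, m)) : adjmx (adjmx A) = A.
Proof. by apply/matrixP => i j; rewrite !mxE conjCK. Qed.

Lemma adjmxM n m p (A : 'M[C]_(n, m)) (B : 'M[C]_(m, p)) :
  adjmx (A *m B) = adjmx B *m adjmx A.
Proof. by rewrite /adjmx map_mxM trmx_mul. Qed.

Lemma adjmxD n m (A B : 'M[C]_(n, m)) : adjmx (A + B) = adjmx A + adjmx B.
Proof. by apply/matrixP => i j; rewrite !mxE rmorphD. Qed.

Lemma adjmxN n m (A : 'M[C]_(n, m)) : adjmx (- A) = - adjmx A.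
Proof. by apply/matrixP => i j; rewrite !mxE rmorphN. Qed.

Lemma adjmxZ n m c (A : 'M[C]_(n, m)) : adjmx (c *: A) = c^* *: adjmx A.
Proof. by apply/matrixP => i j; rewrite !mxE rmorphM. Qed.

Lemma adjmx1 n : adjmx (1%:M : 'M[C]_n) = 1%:M.
Proof. by apply/matrixP => i j; rewrite !mxE rmorphMn rmorph1 eq_sym. Qed.

Lemma realC_conj (x : R) : (x%:C)%C^* = (x%:C)%C.
Proof. exact: conjc_real. Qed.

Lemma psd_cong n m (X : 'M[C]_n) (B : 'M[C]_(n, m)) :
  psd_mx X -> psd_mx (adjmx B *m X *m B).
Proof.
case=> hX qX; split.
  by rewrite /hermitian_mx !adjmxM adjmxK mulmxA -hX.
move=> v; have := qX (v *m adjmx B).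
by rewrite adjmxM adjmxK !mulmxA.
Qed.

Lemma psd_scale n (X : 'M[C]_n) (c : R) : 0 <= c -> psd_mx X -> psd_mx ((c%:C)%C *: X).
Proof.
move=> c0 [hX qX]; split.
  by rewrite /hermitian_mx adjmxZ realC_conj -hX.
move=> v; rewrite -scalemxAr -scalemxAl mxE.
by apply: mulr_ge0 => //; rewrite ler0c.
Qed.

Lemma quad_diag n (v : 'rV[C]_n) (D : 'rV[C]_n) :
  (v *m diag_mx D *m adjmx v) 0 0 = \sum_i D 0 i * (v 0 i * (v 0 i)^*).
Proof.
rewrite mul_mx_diag mxE; apply: eq_bigr => i _.
by rewrite !mxE mulrCA mulrA.
Qed.

Lemma psd_diag n (D : 'rV[C]_n) : (forall i, 0 <= D 0 i) -> psd_mx (diag_mx D).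
Proof.
move=> D0; split.
  apply/matrixP => i j; rewrite !mxE eq_sym rmorphMn.
  case: eqP => [->|//]; congr (_ *+ _); apply/esym; exact: geC0_conj.
move=> v; rewrite quad_diag; apply: sumr_ge0 => i _.
by apply: mulr_ge0 => //; exact: mul_conjC_ge0.
Qed.

Lemma diag_entry n (X : 'M[C]_n) i :
  X i i = ((delta_mx (0 : 'I_1) i : 'rV[C]_n) *m X *m adjmx (delta_mx (0 : 'I_1) i : 'rV[C]_n)) 0 0.
Proof.
have -> : adjmx (delta_mx 0 i : 'rV[C]_n) = delta_mx i 0.
  by apply/matrixP => k l; rewrite !mxE rmorphMn rmorph1 andbC.
by rewrite -rowE -colE !mxE.
Qed.

Lemma psd_tr_ge0 n (X : 'M[C]_n) : psd_mx X -> 0 <= \tr X.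
Proof.
case=> _ qX; rewrite /mxtrace; apply: sumr_ge0 => i _.
by rewrite diag_entry.
Qed.

Lemma rV_norm_gt0 n (v : 'rV[C]_n) : v != 0 -> 0 < (v *m adjmx v) 0 0.
Proof.
by move=> vn0; rewrite adjmxE -dotmxE (dnorm_gt0 (@dotmx C n)).
Qed.

Lemma eig_geC n (M : 'M[C]_n) (c x : C) :
  psd_mx (M - c%:M) -> eigenvalue M x -> c <= x.
Proof.
case=> _ q /eigenvalueP [v vM vn0].
have := q v; rewrite mulmxBr mulmxBl vM mul_mx_scalar -!scalemxAl.
rewrite -scalerBl mxE.
have := rV_norm_gt0 vn0.
set t := (v *m adjmx v) 0 0 => t0.
by rewrite pmulr_lge0 // subr_ge0.
Qed.

Lemma eig_ge n (M : 'M[C]_n) (c x : R) :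
  psd_mx (M - (c%:C)%C%:M) -> eigenvalue M (x%:C)%C -> c <= x.
Proof. by move=> h1 h2; rewrite -lecR; exact: eig_geC h1 h2. Qed.

Lemma eig_ge0 n (M : 'M[C]_n) (x : C) : psd_mx M -> eigenvalue M x -> 0 <= x.
Proof. by move=> h; apply: eig_geC; rewrite raddf0 subr0. Qed.


Lemma spec n (M : 'M[C]_n) : hermitian_mx M -> exists (P : 'M[C]_n) (D : 'rV[C]_n),
  [/\ P *m adjmx P = 1%:M, adjmx P *m P = 1%:M, M = adjmx P *m diag_mx D *m P &
      forall i, eigenvalue M (D 0 i)].
Proof.
move=> hM.
have hM' : M \is hermsymmx by apply/is_hermitianmxP; rewrite /= expr0 scale1r -adjmxE.
have /orthomx_spectralP E := hermitian_normalmx hM'.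
have Pu := spectral_unitarymx M.
rewrite invmx_unitary // -adjmxE in E.
set P := spectralmx M in E Pu *; set D := spectral_diag M in E *.
have PP : P *m adjmx P = 1%:M by rewrite adjmxE; apply/unitarymxP.
have PP' : adjmx P *m P = 1%:M by apply: mulmx1C.
exists P, D; split => // i.
apply/eigenvalueP; exists (delta_mx 0 i *m P).
  rewrite {1}E !mulmxA -(mulmxA _ P) PP mulmx1.
  have -> : delta_mx 0 i *m diag_mx D = D 0 i *: (delta_mx 0 i : 'rV[C]_n).
    apply/matrixP => k l; rewrite mul_mx_diag !mxE.
    rewrite [k]ord1 eqxx /=; case H: (l == i); last by rewrite mul0r mulr0.
    by move/eqP: H => ->; rewrite mulrC.
  by rewrite -scalemxAl.
apply/negP => /eqP h.
have := congr1 (mulmx ^~ (adjmx P)) h; rewrite /= mul0mx -mulmxA PP mulmx1 => /matrixP /(_ 0 i); rewrite !mxE !eqxx /=.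
by move/eqP; rewrite oner_eq0.
Qed.


Lemma psd_tr0 n (X : 'M[C]_n) : psd_mx X -> \tr X = 0 -> X = 0.
Proof.
move=> pX; have [P [D [PP PP' E hD]]] := spec (proj1 pX).
have D0 i : 0 <= D 0 i by exact: eig_ge0 pX (hD i).
rewrite E mxtrace_mulC mulmxA PP mul1mx mxtrace_diag => /psumr_eq0P h.
have -> : D = 0 by apply/matrixP => k l; rewrite [k]ord1 mxE h.
have -> : diag_mx (0 : 'rV[C]_n) = 0 by apply/matrixP => k l; rewrite !mxE mul0rn.
by rewrite mulmx0 mul0mx.
Qed.

Lemma gibbs_props n (beta : R) (H gamma : 'M[C]_n) : (0 < n)%N ->
  gibbs_state beta H gamma -> gamma \in unitmx /\ \tr gamma = 1.
Proof.
move=> n0 [U [d [Uu [_ gE]]]].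
set f := fun x : R => expR (- (beta * x)) in gE.
set E := fun_mx f U d in gE.
have UU' : adjmx U *m U = 1%:M by apply: mulmx1C.
have trE : \tr E = ((\sum_i f (d 0 i))%:C)%C.
  rewrite /E /fun_mx mxtrace_mulC mulmxA UU' mul1mx mxtrace_diag rmorph_sum.
  by apply: eq_bigr => i _; rewrite mxE.
have sp : 0 < \sum_i f (d 0 i).
  rewrite (bigD1 (Ordinal n0)) //=; apply: ltr_wpDr; first by apply: sumr_ge0 => i _; exact: expR_ge0.
  exact: expR_gt0.
have trE0 : \tr E != 0 by rewrite trE; apply/eqP => -[] /eqP; rewrite gt_eqF.
split; last by rewrite gE mxtraceZ mulVf.
set F := U *m diag_mx (\row_i ((expR (beta * d 0 i))%:C)%C) *m adjmx U.
suff h : gamma *m ((\tr E) *: F) = 1%:M by case: (mulmx1_unit h).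
rewrite gE -scalemxAl -scalemxAr scalerA mulVf // scale1r /E /fun_mx /F.
rewrite !mulmxA -(mulmxA _ (adjmx U) U) UU' mulmx1 -(mulmxA U) mulmx_diag.
have -> : \row_j ((\row_i (f (d 0 i))%:C)%C 0 j * (\row_i (expR (beta * d 0 i))%:C)%C 0 j) = const_mx 1.
  by apply/matrixP => k l; rewrite !mxE /f -rmorphM /= mulrC expRxMexpNx_1.
by rewrite diag_const_mx mulmx1.
Qed.

End Aux.

Unset Implicit Arguments.

Theorem mainTheorem1 (R : realType) (n : nat) (H gamma gamma_isqrt rho : 'M[R[i]]_n)
    (beta : R) :
  hermitian_mx H -> beta != 0 -> gibbs_state beta H gamma ->
  (* gamma_isqrt is the positive square root of gamma^{-1} *)
  psd_mx gamma_isqrt -> gamma_isqrt *m gamma_isqrt = invmx gamma ->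
  density_mx rho ->
  let a := 1 - mu_min (gamma_isqrt *m rho *m gamma_isqrt) in
  [/\ athermality_set gamma rho a,
      (forall a', athermality_set gamma rho a' -> a <= a'),
      0 <= a <= 1,
      (a = 0 <-> rho = gamma) &
      (rho <> gamma -> forall tau : 'M[R[i]]_n, density_mx tau ->
         rho = ((1 - a)%:C)%C *: gamma + (a%:C)%C *: tau ->
         tau = ((a^-1)%:C)%C *: (rho - ((1 - a)%:C)%C *: gamma))].
Proof.
move=> _ _ hg pG GG drho a.
set G := gamma_isqrt in pG GG a *.
have n0 : (0 < n)%N.
  case: (posnP n) => // n0; move: (proj2 drho); rewrite /mxtrace big1 //.
    by move/eqP; rewrite eq_sym oner_eq0.
  by move=> i _; have := ltn_ord i; rewrite {2}n0.
have [gU trg] := gibbs_props n0 hg.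
have GGg : G *m (G *m gamma) = 1%:M by rewrite mulmxA GG mulVmx.
have GgG : G *m gamma *m G = 1%:M by apply: mulmx1C.
have Gu : G \in unitmx by case: (mulmx1_unit GGg).
set K := invmx G.
have KG : K *m G = 1%:M by rewrite mulVmx.
have GK : G *m K = 1%:M by rewrite mulmxV.
have KK : K *m K = gamma.
  have e : K *m (G *m gamma *m G) *m K = gamma.
    by rewrite !mulmxA KG mul1mx -mulmxA GK mulmx1.
  by rewrite -[RHS]e GgG mulmx1.
have hG : adjmx G = G by rewrite -(proj1 pG).
have hK : adjmx K = K.
  have e : adjmx K *m adjmx G = 1%:M by rewrite -adjmxM GK adjmx1.
  rewrite hG in e.
  by rewrite -[adjmx K]mulmx1 -GK mulmxA e mul1mx.
set M := G *m rho *m G.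
have pM : psd_mx M by have := psd_cong G (proj1 drho); rewrite hG.
have congM c : G *m (rho - c *: gamma) *m G = M - c%:M.
  by rewrite mulmxBr mulmxBl -scalemxAr -scalemxAl GgG scalemx1.
have congR c : K *m (M - c%:M) *m K = rho - c *: gamma.
  rewrite mulmxBr mulmxBl mul_mx_scalar -scalemxAl KK /M !mulmxA KG mul1mx.
  by rewrite -mulmxA GK mulmx1.
have [P [D [PP PP' ME hD]]] := spec (proj1 pM).
have D0 i : 0 <= D 0 i by exact: eig_ge0 pM (hD i).
have Dx i : D 0 i = ((complex.Re (D 0 i))%:C)%C by rewrite RRe_real // ger0_real.
set S := [set x : R | eigenvalue M ((x%:C)%C)]%classic.
have SD i : S (complex.Re (D 0 i)) by rewrite /S /= -Dx.
have Sne : (S !=set0)%classic by exists (complex.Re (D 0 (Ordinal n0))).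
have Slb : lbound S 0 by move=> x Sx; rewrite -lecR; exact: eig_ge0 pM Sx.
have Shl : has_lbound S by exists 0.
have mu_le i : mu_min M <= complex.Re (D 0 i) by have := ge_inf Shl (SD i).
have mu_ge0 : 0 <= mu_min M by have := lb_le_inf Sne Slb.
have mu_ge c : psd_mx (M - ((c%:C)%C)%:M) -> c <= mu_min M.
  by move=> h; have := @lb_le_inf _ S c Sne; apply => x Sx; exact: eig_ge h Sx.
set mu := mu_min M in a mu_le mu_ge0 mu_ge *.
have pMmu : psd_mx (M - ((mu%:C)%C)%:M).
  set D' := \row_i (D 0 i - (mu%:C)%C).
  have -> : M - ((mu%:C)%C)%:M = adjmx P *m diag_mx D' *m P.
    have -> : diag_mx D' = diag_mx D - ((mu%:C)%C)%:M.
      by apply/matrixP => k l; rewrite !mxE; case: (k == l); rewrite ?mulr1n ?mulr0n ?subr0.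
    by rewrite mulmxBr mulmxBl mul_mx_scalar -scalemxAl PP' scalemx1 ME.
  apply: psd_cong; apply: psd_diag => i; rewrite mxE Dx -rmorphB ler0c subr_ge0.
  exact: mu_le.
have pRmu : psd_mx (rho - (mu%:C)%C *: gamma).
  by have := psd_cong K pMmu; rewrite hK congR.
have trR c : \tr (rho - c *: gamma) = 1 - c.
  by rewrite raddfB /= mxtraceZ trg mulr1 (proj2 drho).
have mu_le1 : mu <= 1.
  by have := psd_tr_ge0 pRmu; rewrite trR -(rmorph1 (real_complex R)) -rmorphB ler0c subr_ge0.
have amu : 1 - a = mu by rewrite /a; lra.
have a0 : a = 0 -> rho = gamma.
  move=> a0; have mu1 : mu = 1 by rewrite -amu a0 subr0.
  rewrite mu1 rmorph1 scale1r in pRmu.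
  by apply/subr0_eq/psd_tr0 => //; rewrite -(scale1r gamma) trR subrr.
have mem0 : rho = gamma -> athermality_set gamma rho 0.
  move=> rg; split => //; exists rho; split => //.
  by rewrite subr0 rmorph1 scale1r rmorph0 scale0r addr0.
have amin a' : athermality_set gamma rho a' -> a <= a'.
  move=> [a'0 [tau [dtau eq]]].
  have e1 : rho - ((1 - a')%:C)%C *: gamma = (a'%:C)%C *: tau.
    by rewrite eq [X in X - _]addrC addrK.
  have p1 : psd_mx (M - (((1 - a')%:C)%C)%:M).
    by rewrite -congM e1 -{1}hG; apply: psd_cong; apply: psd_scale => //; case: dtau.
  have := mu_ge _ p1; rewrite /a; lra.
split => //.
- split; first by rewrite /a; lra.
  have [az|anz] := eqVneq a 0.
    by rewrite az; case: (mem0 (a0 az)).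
  exists (((a^-1)%:C)%C *: (rho - (mu%:C)%C *: gamma)); split.
    split; first by apply: psd_scale => //; rewrite invr_ge0 /a; lra.
    by rewrite mxtraceZ trR -rmorphB -rmorphM /= -amu opprB addrC subrK mulVf // rmorph1.
  by rewrite scalerA -rmorphM mulfV // rmorph1 scale1r amu addrC subrK.
- by apply/andP; split; rewrite /a; lra.
- split; first exact: a0.
  move=> rg; have h1 := amin 0 (mem0 rg).
  apply/eqP; rewrite eq_le h1 /=; rewrite /a; lra.
- move=> rng tau _ eq.
  have anz : a != 0 by apply/eqP => /a0.
  by rewrite eq [X in X - _]addrC addrK scalerA -rmorphM mulVf // rmorph1 scale1r.
Qed.
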